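(* Let $Q$ be a finite quiver with $kQ$ of finite GK-dimension. For any graded right $kQ$-module $M$, $\pi^*M=0$ if and only if $\mathrm{Hom}_{\mathrm{QGr}\,kQ}(\pi^*\mathcal O_v,\pi^*M)=0$ for every cyclic vertex $v$.
   Context: $kQ$ is the path algebra of a finite quiver over a field $k$, graded by path length. $\mathrm{QGr}\,kQ$ is the quotient of graded right modules by torsion modules (modules each of whose elements is annihilated by $(kQ)_{\ge n}$ for some $n$), with quotient functor $\pi^*$. With finite GK-dimension each cyclic vertex $v$ lies on a unique simple cycle $p=(v=v_0,a_1,\dots,a_n,v_n=v)$, and $\mathcal O_v=e_vkQ/\bigoplus p^m a_1\cdots a_i b\,kQ$ (sum over $m\ge0$, $0\le i<n$, arrows $b\neq a_{i+1}$ with source $v_i$). *)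

(* Defs.v *)
From HB Require Import structures.
From mathcomp Require Import all_boot all_order all_algebra.
Set Implicit Arguments. Unset Strict Implicit. Unset Printing Implicit Defensive.
Import Order.TTheory GRing.Theory Num.Theory.
Local Open Scope ring_scope.

(* A finite quiver. Paths are written left to right: the path a_1 ... a_n
   satisfies tgt a_i = src a_(i+1). *)
Record quiver := Quiver {
  qV : finType; qA : finType; src : qA -> qV; tgt : qA -> qV }.

Fixpoint ispath {Q : quiver} (v w : qV Q) (s : seq (qA Q)) : bool :=
  match s with
  | [::] => v == w
  | a :: s' => (src a == v) && ispath (tgt a) w s'
  end.

(* number of paths of length m (= dim of (kQ)_m) *)
Definition npaths (Q : quiver) (m : nat) : nat :=
  (\sum_(v : qV Q) \sum_(w : qV Q) #|[set t : m.-tuple (qA Q) | ispath v w t]|)%N.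

(* kQ has finite GK-dimension: with the generating subspace V = kQ_0 + kQ_1,
   dim V^n = dim kQ_{<= n} grows at most polynomially in n. *)
Definition finite_GKdim (Q : quiver) : Prop :=
  exists c C : nat, forall n : nat,
    (\sum_(m < n.+1) npaths Q m <= C * n.+1 ^ c)%N.

Definition simple_cycle (Q : quiver) (v : qV Q) (c : seq (qA Q)) : bool :=
  [&& (0 < size c)%N, ispath v v c & uniq (map (@src Q) c)].

(* A Z-graded right kQ-module, given by its homogeneous pieces
   M_(d,w) = (M e_w)_d and the right action of arrows. *)
Record grmod (k : fieldType) (Q : quiver) := GrMod {
  gsp : int -> qV Q -> lmodType k;
  gact : forall (d : int) (w : qV Q) (a : qA Q), gsp d w -> gsp (d + 1) (tgt a) }.
Arguments gsp {k Q} g d w : rename.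
Arguments gact {k Q} g d w a x : rename.
Arguments GrMod {k Q} gsp gact.

(* module axioms: arrow actions are k-linear, and x e_w a = 0 unless w = src a *)
Definition is_grmod k Q (M : grmod k Q) : Prop :=
  (forall d w a (c : k) (x y : gsp M d w),
      gact M d w a (c *: x + y) = c *: gact M d w a x + gact M d w a y) /\
  (forall d w a (x : gsp M d w), w != src a -> gact M d w a x = 0).

Definition grsub k Q (M : grmod k Q) := forall d w, gsp M d w -> Prop.

Definition zero_sub k Q (M : grmod k Q) : grsub M := fun d w x => x = 0.
Arguments zero_sub {k Q} M d w x.

Definition incl k Q (M : grmod k Q) (S T : grsub M) : Prop :=
  forall d w x, S d w x -> T d w x.
Arguments incl {k Q M} S T.

Definition is_subgr k Q (M : grmod k Q) (S : grsub M) : Prop :=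
  (forall d w, S d w 0) /\
  (forall d w (c : k) x y, S d w x -> S d w y -> S d w (c *: x + y)) /\
  (forall d w a x, S d w x -> S (d + 1) (tgt a) (gact M d w a x)).
Arguments is_subgr {k Q M} S.

Fixpoint killmod k Q (M : grmod k Q) (S : grsub M) (n : nat) :
    forall d w, gsp M d w -> Prop :=
  match n with
  | 0%N => fun d w x => S d w x
  | n'.+1 => fun d w x => forall a, @killmod k Q M S n' (d + 1) (tgt a) (gact M d w a x)
  end.
Arguments killmod {k Q M} S n d w x.

(* M/S is torsion: every element is annihilated (mod S) by (kQ)_{>= n}, some n *)
Definition torsion_quot k Q (M : grmod k Q) (S : grsub M) : Prop :=
  forall d w x, exists n, killmod S n d w x.
Arguments torsion_quot {k Q M} S.

Definition torsion_sub k Q (M : grmod k Q) (T : grsub M) : Prop :=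
  forall d w x, T d w x -> exists n, killmod (zero_sub M) n d w x.
Arguments torsion_sub {k Q M} T.

(* g (a set map, lifting to M) induces a graded kQ-hom  N' -> M/M' *)
Definition qhom k Q (N M : grmod k Q) (N' : grsub N) (M' : grsub M)
    (g : forall d w, gsp N d w -> gsp M d w) : Prop :=
  (forall d w (c : k) x y, N' d w x -> N' d w y ->
      M' d w (g d w (c *: x + y) - (c *: g d w x + g d w y))) /\
  (forall d w a x, N' d w x ->
      M' (d + 1) (tgt a) (g (d + 1) (tgt a) (gact N d w a x) - gact M d w a (g d w x))).
Arguments qhom {k Q N M} N' M' g.

(* Hom_{QGr kQ}(pi^*(N/I), pi^*M) = 0, where
   Hom_QGr(pi N0, pi M) = colim Hom_Gr(N', M/M') over graded submodules
   N' <= N0 with N0/N' torsion and torsion graded submodules M' <= M.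
   Submodules N' of N0 = N/I are encoded as submodules of N containing I,
   and homs into M/M' by set-theoretic lifts g. The colimit is zero iff every
   element becomes zero at some larger index (N'' <= N', M'' >= M'). *)
Definition HomQGr_zero k Q (N : grmod k Q) (I : grsub N) (M : grmod k Q) : Prop :=
  forall (N' : grsub N) (M' : grsub M) (g : forall d w, gsp N d w -> gsp M d w),
    is_subgr N' -> incl I N' -> torsion_quot N' ->
    is_subgr M' -> torsion_sub M' ->
    qhom N' M' g -> (forall d w x, I d w x -> M' d w (g d w x)) ->
    exists (N'' : grsub N) (M'' : grsub M),
      is_subgr N'' /\ incl I N'' /\ incl N'' N' /\ torsion_quot N'' /\
      is_subgr M'' /\ torsion_sub M'' /\ incl M' M'' /\
      (forall d w x, N'' d w x -> M'' d w (g d w x)).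
Arguments HomQGr_zero {k Q N} I M.

(* pi^* M = 0  (pi^*M is a zero object iff End_QGr(pi^*M) = 0) *)
Definition pi_zero k Q (M : grmod k Q) : Prop := HomQGr_zero (zero_sub M) M.
Arguments pi_zero {k Q} M.

(* The graded right module e_v kQ: (e_v kQ e_w)_d has basis the paths of
   length d from v to w (none if d < 0). *)
Definition pbasis (Q : quiver) (v : qV Q) (d : int) (w : qV Q) : finType :=
  {t : (absz d).-tuple (qA Q) | (0 <= d) && ispath v w t}.

Definition evkQ_sp (k : fieldType) (Q : quiver) (v : qV Q) (d : int) (w : qV Q)
  : lmodType k := {ffun pbasis v d w -> k^o}.

Definition evkQ_act (k : fieldType) (Q : quiver) (v : qV Q) (d : int) (w : qV Q)
    (a : qA Q) (f : evkQ_sp k v d w) : evkQ_sp k v (d + 1) (tgt a) :=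
  [ffun y : pbasis v (d + 1) (tgt a) =>
     \sum_(x : pbasis v d w)
        (if (val x : seq _) ++ [:: a] == (val y : seq _) then f x else 0)].

Definition evkQ (k : fieldType) (Q : quiver) (v : qV Q) : grmod k Q :=
  @GrMod k Q (evkQ_sp k v) (@evkQ_act k Q v).
Arguments evkQ k {Q} v.

(* the right submodule  (+)_{m, i, b} p^m a_1 ... a_i b kQ  of e_v kQ,
   where c = [a_1; ...; a_n] is the simple cycle p at v, 0 <= i < n,
   and b <> a_(i+1) is an arrow with source v_i = src a_(i+1).
   It is spanned by the basis paths of the form p^m a_1..a_i b q. *)
Definition Ov_rel (k : fieldType) (Q : quiver) (v : qV Q) (c : seq (qA Q))
  : grsub (evkQ k v) :=
  fun d w f => forall x : pbasis v d w, f x != 0 ->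
    exists (m i : nat) (b : qA Q) (q : seq (qA Q)),
      [/\ (i < size c)%N, b != nth b c i, src b = src (nth b c i) &
          (val x : seq _) = flatten (nseq m c) ++ take i c ++ b :: q].
Arguments Ov_rel k {Q} v c d w f.

(* Main.v *)
Require Import Defs.
From HB Require Import structures.
From mathcomp Require Import all_boot all_order all_algebra.
From mathcomp Require Import zify.
From Stdlib Require Import ClassicalEpsilon Classical.
Set Implicit Arguments. Unset Strict Implicit. Unset Printing Implicit Defensive.
Import Order.TTheory GRing.Theory Num.Theory.

Section Paths.
Variable Q : quiver.
Implicit Types (v w x : qV Q) (s t : seq (qA Q)).

Definition pend v s := foldl (fun _ a => tgt a) v s.

Lemma ispath_end v w s : ispath v w s -> w = pend v s.
Proof. elim: s v => [|a s IH] v /=; [by move/eqP | by case/andP=> _ /IH]. Qed.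

Lemma ispath_cat v w s t :
  ispath v w (s ++ t) = ispath v (pend v s) s && ispath (pend v s) w t.
Proof.
elim: s v => [|a s IH] v /=; first by rewrite eqxx.
by rewrite IH andbA.
Qed.

Lemma ispath_catP v x w s t : ispath v x s -> ispath x w t -> ispath v w (s ++ t).
Proof. by move=> k1 k2; rewrite ispath_cat -(ispath_end k1) k1. Qed.

Lemma size_fnseq (T : Type) k (s : seq T) : size (flatten (nseq k s)) = (k * size s)%N.
Proof. by elim: k => //= k IH; rewrite size_cat IH mulSn. Qed.

Lemma ispath_fnseq u k s : ispath u u s -> ispath u u (flatten (nseq k s)).
Proof. by move=> h; elim: k => [|k IH] //=; exact: ispath_catP h IH. Qed.

Lemma closed_head (hGK : finite_GKdim Q) u a1 a2 s1 s2 :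
  ispath u u (a1 :: s1) -> ispath u u (a2 :: s2) -> a1 = a2.
Proof.
move=> h1 h2; apply/eqP/negPn/negP => ne.
set L1 := size (a1 :: s1); set L2 := size (a2 :: s2).
set B1 := flatten (nseq L2 (a1 :: s1)); set B2 := flatten (nseq L1 (a2 :: s2)).
set L := (L1 * L2)%N.
have sB1 : size B1 = L by rewrite size_fnseq mulnC.
have sB2 : size B2 = L by rewrite size_fnseq.
have pB1 : ispath u u B1 by exact: ispath_fnseq.
have pB2 : ispath u u B2 by exact: ispath_fnseq.
have hB1 : B1 = a1 :: (s1 ++ flatten (nseq L2.-1 (a1 :: s1))) by [].
have hB2 : B2 = a2 :: (s2 ++ flatten (nseq L1.-1 (a2 :: s2))) by [].
pose blk (b : bool) := if b then B1 else B2.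
pose enc (bs : seq bool) := flatten (map blk bs).
have senc bs : size (enc bs) = (size bs * L)%N.
  elim: bs => //= b bs IH; rewrite size_cat IH mulSn; by case: b; rewrite /blk ?sB1 ?sB2.
have penc bs : ispath u u (enc bs).
  elim: bs => [|b bs IH] /=; first by rewrite eqxx.
  by apply: ispath_catP IH; case: b; rewrite /blk.
have blk_inj : injective blk.
  move=> [] [] //= E; have := congr1 (head a1) E; rewrite hB1 hB2 /= => E';
  by move: ne; rewrite E' eqxx.
have enc_inj bs1 bs2 : size bs1 = size bs2 -> enc bs1 = enc bs2 -> bs1 = bs2.
  elim: bs1 bs2 => [|b1 bs1 IH] [|b2 bs2] //= [sz] E.
  have sb b : size (blk b) = L by case: b; rewrite /blk.

  have := congr1 (take L) E; rewrite !take_size_cat // => /blk_inj ->.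
  by rewrite (IH bs2 sz) //; have := congr1 (drop L) E; rewrite !drop_size_cat.
have key N : (2 ^ N <= npaths Q (N * L))%N.
  have sz (t : N.-tuple bool) : size (enc t) == (N * L)%N by rewrite senc size_tuple.
  pose f (t : N.-tuple bool) : (N * L).-tuple (qA Q) := Tuple (sz t).
  have finj : injective f.
    move=> t1 t2 /(congr1 (fun tt : (N * L).-tuple (qA Q) => tval tt)) /= E.
    apply: val_inj; apply: enc_inj E; by rewrite !size_tuple.
  have -> : (2 ^ N = #|f @: [set: N.-tuple bool]|)%N.
    by rewrite card_imset // cardsT card_tuple card_bool.
  apply: (@leq_trans #|[set t : (N * L).-tuple (qA Q) | ispath u u t]|).
    apply: subset_leq_card; apply/subsetP => t /imsetP [t0 _ ->].
    by rewrite inE /= penc.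
  rewrite /npaths (bigD1 u) //= (bigD1 u) //= -addnA; exact: leq_addr.
case: hGK => c [C hC].
have L1p : (0 < L1)%N by []. have L2p : (0 < L2)%N by [].
have Lp : (0 < L)%N by rewrite muln_gt0 L1p L2p.
set K := (C * (2 * c.+1 * L) ^ c).+1.
set N := (K * c.+1)%N.
have Kp : (0 < K)%N by [].
have k1 : (2 ^ N <= C * (N * L).+1 ^ c)%N.
  apply: leq_trans (key N) _; apply: leq_trans (hC (N * L)%N).
  by rewrite big_ord_recr /= leq_addl.
have k2 : ((N * L).+1 <= 2 * c.+1 * L * K)%N.
  have : (1 <= N * L)%N by rewrite muln_gt0 Lp muln_gt0 Kp.
  rewrite /N; lia.
have k3 : (C * (N * L).+1 ^ c <= C * (2 * c.+1 * L) ^ c * K ^ c)%N.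
  rewrite -mulnA -expnMn leq_mul2l; apply/orP; right.
  have pw e m n : (m <= n -> m ^ e <= n ^ e)%N.
    by move=> h; elim: e => // e IH; rewrite !expnS leq_mul.
  exact: pw.
have k4 : (C * (2 * c.+1 * L) ^ c * K ^ c < K ^ c.+1)%N.
  by rewrite expnS ltn_mul2r expn_gt0 Kp /K ltnSn.
have k5 : (K ^ c.+1 < 2 ^ N)%N.
  by rewrite /N expnM ltn_exp2r // ltn_expl.
have := leq_ltn_trans (leq_trans k1 k3) (ltn_trans k4 k5).
by rewrite ltnn.
Qed.


Lemma src_nth v w s a i : ispath v w s -> (i < size s)%N -> src (nth a s i) = pend v (take i s).
Proof.
elim: s v i => [|b s IH] v [|i] //= /andP [/eqP hb hp] hi //.
exact: IH.
Qed.

Lemma tgt_nth v w s a i : ispath v w s -> (i < size s)%N -> tgt (nth a s i) = pend v (take i.+1 s).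
Proof.
elim: s v i => [|b s IH] v [|i] //= /andP [/eqP hb hp] hi.
  by case: s hp {IH hi}.
exact: IH.
Qed.

Lemma walk_path (f : nat -> qA Q) : (forall i, tgt (f i) = src (f i.+1)) ->
  forall m, ispath (src (f 0)) (src (f m)) (mkseq f m).
Proof.
move=> hf; elim=> [|m IH]; first by rewrite /= eqxx.
rewrite mkseqS -cats1; apply: ispath_catP IH _.
by rewrite /= eqxx hf eqxx.
Qed.

End Paths.
Local Open Scope ring_scope.
Section Sig.
Variables (k : fieldType) (Q : quiver) (G : grmod k Q).

Definition Pt := {dw : int * qV Q & gsp G dw.1 dw.2}.
Definition pact (a : qA Q) (p : Pt) : Pt :=
  let: existT dw x := p in existT _ (dw.1 + 1, tgt a) (gact G dw.1 dw.2 a x).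
Definition pmk d w (x : gsp G d w) : Pt := existT (fun dw => gsp G dw.1 dw.2) (d, w) x.
Definition Sg (S : grsub G) (p : Pt) : Prop := S (projT1 p).1 (projT1 p).2 (projT2 p).
Definition pfold (p : Pt) (s : seq (qA Q)) := foldl (fun q a => pact a q) p s.

Lemma killmodP (S : grsub G) n d w x :
  killmod S n d w x <-> forall s, size s = n -> Sg S (pfold (pmk x) s).
Proof.
elim: n d w x => [|n IH] d w x /=.
  by split=> [h [|//] _|h]; [exact: h | exact: (h [::])].
split=> h.
  by move=> [|a s] //= [sz]; exact/(IH _ _ _).1.
by move=> a; apply/(IH (d + 1) (tgt a)) => s sz; apply: (h (a :: s)); rewrite /= sz.
Qed.

End Sig.

Section Mod.
Variables (k : fieldType) (Q : quiver) (M : grmod k Q).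
Hypothesis hM : is_grmod M.

Lemma gact0 d w a : gact M d w a 0 = 0.
Proof.
have E := hM.1 d w a 1 0 0; rewrite !scale1r addr0 in E.
by apply: (addrI (gact M d w a 0)); rewrite addr0 -E.
Qed.

Definition tor d w (x : gsp M d w) := exists n, killmod (zero_sub M) n d w x.

Lemma kill_zero n d w : killmod (zero_sub M) n d w 0.
Proof. by elim: n d w => [|n IH] d w //= a; rewrite gact0. Qed.

Lemma kill_S n d w x : killmod (zero_sub M) n d w x -> killmod (zero_sub M) n.+1 d w x.
Proof.
elim: n d w x => [|n IH] d w x /=.
  by rewrite /zero_sub => -> a; rewrite gact0.
by move=> h a; apply: IH.
Qed.

Lemma kill_le n m d w x : (n <= m)%N ->
  killmod (zero_sub M) n d w x -> killmod (zero_sub M) m d w x.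
Proof.
move=> /subnK <-; elim: (m - n)%N => // j IH h; rewrite addSn; exact/kill_S/IH.
Qed.

Lemma kill_lin n d w (c : k) x y : killmod (zero_sub M) n d w x ->
  killmod (zero_sub M) n d w y -> killmod (zero_sub M) n d w (c *: x + y).
Proof.
elim: n d w x y => [|n IH] d w x y /=.
  by rewrite /zero_sub => -> ->; rewrite scaler0 addr0.
by move=> hx hy a; rewrite hM.1; apply: IH.
Qed.

Lemma tor0 d w : tor (0 : gsp M d w).
Proof. by exists 0%N. Qed.

Lemma tor_lin d w (c : k) x y : tor x -> tor y -> @tor d w (c *: x + y).
Proof.
move=> [n1 h1] [n2 h2]; exists (maxn n1 n2); apply: kill_lin.
  exact: kill_le (leq_maxl _ _) h1.
exact: kill_le (leq_maxr _ _) h2.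
Qed.

Lemma tor_act d w a x : @tor d w x -> tor (gact M d w a x).
Proof. by move=> [n h]; exists n; exact: (kill_S h). Qed.

Lemma tor_arrows d w x : (forall a, tor (gact M d w a x)) -> @tor d w x.
Proof.
move=> /fin_all_exists [f hf]; exists (\max_a f a).+1 => /= a.
by apply: kill_le (hf a); exact: leq_bigmax.
Qed.

Lemma tor_src d w a x : w != src a -> tor (gact M d w a x).
Proof. by move=> h; rewrite hM.2 //; exact: tor0. Qed.

Lemma tor_sub : is_subgr (fun d w (x : gsp M d w) => tor x).
Proof.
split; first by move=> d w; exact: tor0.
split; first by move=> *; exact: tor_lin.
by move=> *; exact: tor_act.
Qed.

End Mod.
Section Easy.
Variables (k : fieldType) (Q : quiver) (M : grmod k Q).
Hypothesis hM : is_grmod M.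

Definition torP (p : Pt M) := tor (projT2 p).

Lemma tor_fold n d w x :
  (forall s, size s = n -> torP (pfold (pmk x) s)) -> @tor k Q M d w x.
Proof.
elim: n d w x => [|n IH] d w x h; first exact: (h [::]).
apply: tor_arrows => // a; apply: IH => s sz.
by apply: (h (a :: s)); rewrite /= sz.
Qed.

Lemma allTor_Hom (N : grmod k Q) (I : grsub N) :
  (forall d w (x : gsp M d w), tor x) -> HomQGr_zero I M.
Proof.
move=> ht N' M' g sN' iN' tN' sM' tM' qg gI.
exists N', (fun _ _ _ => True); do !split => //.
by move=> d w x _; exact: ht.
Qed.

Lemma pi_zero_tor : pi_zero M -> forall d w (x : gsp M d w), tor x.
Proof.
move=> h.
have s1 : is_subgr (fun d w (x : gsp M d w) => True) by [].
have s2 : is_subgr (zero_sub M).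
  split; first by [].
  split; first by rewrite /zero_sub => d w c x y -> ->; rewrite scaler0 addr0.
  by rewrite /zero_sub => d w a x ->; rewrite gact0.
have s3 : torsion_sub (zero_sub M) by rewrite /zero_sub => d w x ->; exists 0%N.
have s4 : torsion_quot (fun d w (x : gsp M d w) => True) by move=> d w x; exists 0%N.
have s5 : qhom (fun d w (x : gsp M d w) => True) (zero_sub M) (fun d w x => x).
  by split=> * ; rewrite /zero_sub subrr.
case: (h _ _ _ s1 (fun _ _ _ _ => I) s4 s2 s3 s5 (fun _ _ _ x => x)).
move=> N'' [M''] [_ [_ [_ [tN'' [_ [tM'' [_ hg]]]]]]] d w x.
have [n /killmodP hn] := tN'' d w x.
apply: (@tor_fold n) => s sz; rewrite /torP.
exact: tM'' _ _ _ (hg _ _ _ (hn s sz)).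
Qed.

End Easy.
Section Construction.
Variables (k : fieldType) (Q : quiver) (M : grmod k Q).
Hypothesis hM : is_grmod M.
Variables (v : qV Q) (n D0 : nat) (cw : nat -> qA Q) (Zs : nat -> Pt M).
Hypothesis Hn : (0 < n)%N.
Hypothesis Hper : forall i, cw (i + n)%N = cw i.
Hypothesis Hpath : forall i, tgt (cw i) = src (cw i.+1).
Hypothesis Hv : src (cw 0) = v.
Hypothesis HD0 : (n %| D0)%N.
Hypothesis HZidx : forall t, projT1 (Zs t) = ((D0 + t)%N%:Z, src (cw t)).
Hypothesis HZnt : forall t, ~ torP (Zs t).
Hypothesis HZnext : forall t, Zs t.+1 = pact (cw t) (Zs t).
Hypothesis HZexit : forall t b, b != cw t -> torP (pact b (Zs t)).

Definition cycw L := mkseq cw L.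

Lemma cycw_path L : ispath v (src (cw L)) (cycw L).
Proof.
elim: L => [|L IH]; first by rewrite /= Hv eqxx.
rewrite /cycw mkseqS -cats1; apply: ispath_catP IH _.
by rewrite /= eqxx Hpath eqxx.
Qed.

Lemma cycwS L : cycw L.+1 = rcons (cycw L) (cw L).
Proof. by rewrite /cycw mkseqS. Qed.

Lemma cw_D0 t : cw (D0 + t) = cw t.
Proof.
case/dvdnP: HD0 => m ->; elim: m => [|m IH] //.
by rewrite mulSn -addnA addnC Hper.
Qed.

Lemma abszS (d : int) : 0 <= d -> absz (d + 1) = (absz d).+1.
Proof. by case: d => // m _; rewrite -PoszD addn1. Qed.

Definition mkb (d : int) (w : qV Q) (hd : 0 <= d) (hp : ispath v w (cycw (absz d)))
  : pbasis v d w :=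
  exist _ (@Tuple (absz d) _ (cycw (absz d)) (introT eqP (size_mkseq _ _)))
    (introT andP (conj hd hp)).

Definition coef d w (f : evkQ_sp k v d w) : k :=
  \sum_(t : pbasis v d w | tval (sval t) == cycw (absz d)) (f t : k).

Lemma coef_single d w (f : evkQ_sp k v d w) (t0 : pbasis v d w) :
  tval (sval t0) == cycw (absz d) -> coef f = f t0.
Proof.
move=> h0; rewrite /coef (bigD1 t0) //= big1 ?addr0 // => t /andP [ht ne].
exfalso; move/eqP: ne; apply; apply: val_inj; apply: val_inj.
exact: (etrans (eqP ht) (esym (eqP h0))).
Qed.

Lemma coef_none d w (f : evkQ_sp k v d w) :
  (forall t : pbasis v d w, tval (sval t) != cycw (absz d)) -> coef f = 0.
Proof. by move=> h; rewrite /coef big1 // => t ht; move: (h t); rewrite ht. Qed.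

Lemma coef_lin d w (c : k) (x y : evkQ_sp k v d w) :
  coef (c *: x + y) = c * coef x + coef y.
Proof.
rewrite /coef big_distrr -big_split /=; apply: eq_bigr => t _.
by rewrite !ffunE.
Qed.

Lemma basis_end d w (t : pbasis v d w) :
  tval (sval t) == cycw (absz d) -> w = src (cw (absz d)).
Proof.
move=> /eqP ht; have /andP [_ hp] := svalP t; rewrite ht in hp.
by rewrite (ispath_end hp) -(ispath_end (cycw_path _)).
Qed.

Lemma coef_wrong d w (f : evkQ_sp k v d w) : w != src (cw (absz d)) -> @coef d w f = 0.
Proof.
move=> hw; apply: coef_none => t; apply/negP => /basis_end E.
by rewrite E eqxx in hw.
Qed.

Lemma actE d w a (f : evkQ_sp k v d w) (y : pbasis v (d + 1) (tgt a)) :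
  gact (evkQ k v) d w a f y =
  \sum_(x : pbasis v d w) (if tval (sval x) ++ [:: a] == tval (sval y) then f x else 0).
Proof. by rewrite /= ffunE. Qed.

Lemma act_vanish d w a (f : evkQ_sp k v d w) :
  (forall x : pbasis v d w, tval (sval x) == cycw (absz d) -> f x = 0) ->
  forall y : pbasis v (d + 1) (tgt a), tval (sval y) == cycw (absz (d + 1)) ->
  gact (evkQ k v) d w a f y = 0.
Proof.
move=> hf y /eqP hy; rewrite actE big1 // => x _.
case: ifP => // /eqP E; apply: hf.
have /andP [hd _] := svalP x.
by move: E; rewrite hy abszS // cycwS cats1 => /eqP; rewrite eqseq_rcons => /andP [].
Qed.

Lemma coef_act d w a (f : evkQ_sp k v d w) : 0 <= d ->
  coef (gact (evkQ k v) d w a f) = if a == cw (absz d) then coef f else 0.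
Proof.
move=> hd; case: eqP => [ea|na].
  have hd1 : 0 <= d + 1 by rewrite (le_trans hd) // lerDl.
  have hp : ispath v (tgt a) (cycw (absz (d + 1))).
    by rewrite ea abszS // Hpath; exact: cycw_path.
  rewrite (@coef_single _ _ _ (mkb hd1 hp)) //= actE /coef [RHS]big_mkcond /=.
  apply: eq_bigr => x _; rewrite abszS // cycwS cats1 ea eqseq_rcons eqxx andbT.
  by [].
rewrite /coef big1 // => y /eqP hy; rewrite actE big1 // => x _.
case: ifP => // /eqP E; exfalso; apply: na.
have /andP [hd' _] := svalP x.
by move: E; rewrite hy abszS // cycwS cats1 => /eqP; rewrite eqseq_rcons => /andP [_ /eqP].
Qed.


Definition cast (dw dw' : int * qV Q) (e : dw = dw') (x : gsp M dw.1 dw.2) :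
  gsp M dw'.1 dw'.2 := eq_rect dw (fun p => gsp M p.1 p.2) x dw' e.

Lemma cast_tor dw dw' (e : dw = dw') x : tor (cast e x) <-> tor x.
Proof. by case: dw' / e. Qed.

Lemma cast_act (p : Pt M) d w a (e1 : projT1 p = (d, w))
  (e2 : projT1 (pact a p) = (d + 1, tgt a)) :
  cast e2 (projT2 (pact a p)) = gact M d w a (cast e1 (projT2 p)).
Proof.
case: p e1 e2 => [[d' w'] x] e1 e2.
have [hd hw] : d' = d /\ w' = w by case: e1.
subst d' w'; rewrite (eq_irrelevance e1 erefl) /=.
by rewrite (eq_irrelevance e2 erefl).
Qed.

Lemma gactZ d w a (r : k) x : gact M d w a (r *: x) = r *: gact M d w a x.
Proof. by have := hM.1 d w a r x 0; rewrite addr0 (gact0 hM) addr0. Qed.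

Definition gZ d w (r : k) : gsp M d w :=
  match projT1 (Zs (absz (d - D0%:Z))) =P (d, w) with
  | ReflectT e => r *: cast e (projT2 (Zs (absz (d - D0%:Z))))
  | ReflectF _ => 0
  end.

Lemma gZ_eq d w r (e : projT1 (Zs (absz (d - D0%:Z))) = (d, w)) :
  gZ d w r = r *: cast e (projT2 (Zs (absz (d - D0%:Z)))).
Proof.
rewrite /gZ; case: eqP => [e'|ne]; first by rewrite (eq_irrelevance e' e).
by case: (ne e).
Qed.

Lemma gZ_lin d w (c r1 r2 : k) : gZ d w (c * r1 + r2) = c *: gZ d w r1 + gZ d w r2.
Proof.
rewrite /gZ; case: eqP => [e|_]; first by rewrite scalerDl scalerA.
by rewrite scaler0 addr0.
Qed.

Lemma gZ0 d w : gZ d w 0 = 0.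
Proof. by rewrite /gZ; case: eqP => // e; rewrite scale0r. Qed.

Lemma gZ_idx d w : D0%:Z <= d -> w = src (cw (absz d)) ->
  projT1 (Zs (absz (d - D0%:Z))) = (d, w).
Proof.
move=> hd ->; rewrite HZidx.
have e : d = (D0 + absz (d - D0%:Z))%N%:Z.
  by rewrite PoszD gez0_abs ?subr_ge0 // addrCA subrr addr0.
congr pair; first by rewrite -e.
by rewrite {2}e /= cw_D0.
Qed.


Lemma cw_mn m i : cw (m * n + i) = cw i.
Proof. by elim: m => // m IH; rewrite mulSn -addnA addnC Hper. Qed.

Lemma cyc_contra L m i b q :
  cycw L = flatten (nseq m (mkseq cw n)) ++ take i (mkseq cw n) ++ b :: q ->
  (i < n)%N -> b != nth b (mkseq cw n) i -> False.
Proof.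
move=> E hi; rewrite nth_mkseq // => /eqP; apply.
have sf : size (flatten (nseq m (mkseq cw n))) = (m * n)%N by rewrite size_fnseq size_mkseq.
have st : size (take i (mkseq cw n)) = i by rewrite size_takel // size_mkseq ltnW.
have := congr1 (fun s => nth b s (m * n + i)) E.
rewrite /= nth_cat sf ltnNge leq_addr /= addKn nth_cat st ltnn subnn /=.
have hL : (m * n + i < L)%N.
  have := congr1 size E; rewrite /cycw size_mkseq !size_cat sf st /= => ->.
  by rewrite ltn_add2l addnS ltnS leq_addr.
by rewrite /cycw nth_mkseq // cw_mn => ->.
Qed.

Lemma noOv d w (f : evkQ_sp k v d w) : Ov_rel k v (mkseq cw n) d w f ->
  forall t : pbasis v d w, tval (sval t) == cycw (absz d) -> f t = 0.
Proof.
move=> h t /eqP ht; apply/eqP/negPn/negP => /h [m [i [b [q [hi hb _ E]]]]].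
rewrite size_mkseq in hi.
exact: (cyc_contra (etrans (esym ht) E) hi hb).
Qed.

Lemma vanish_coef d w (f : evkQ_sp k v d w) :
  (forall t : pbasis v d w, tval (sval t) == cycw (absz d) -> f t = 0) -> coef f = 0.
Proof. by move=> h; rewrite /coef big1. Qed.

Definition gg d w (f : evkQ_sp k v d w) : gsp M d w :=
  if D0%:Z <= d then gZ d w (coef f) else 0.

Definition Nq : grsub (evkQ k v) := fun d w f => D0%:Z <= d \/
  (forall t : pbasis v d w, tval (sval t) == cycw (absz d) -> f t = 0).

Definition Mt : grsub M := fun d w x => tor x.

Lemma kill_high (G : grmod k Q) (S : grsub G) (D : int) :
  (forall d w x, D <= d -> S d w x) ->
  forall m d w x, D <= d + m%:Z -> killmod S m d w x.
Proof.
move=> hS; elim=> [|m IH] d w x /=; first by rewrite addr0; exact: hS.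
move=> h a; apply: IH; by rewrite -addrA -(PoszD 1 m) add1n.
Qed.

Lemma Nq_sub : is_subgr Nq.
Proof.
split; first by move=> d w; right=> t _; rewrite ffunE.
split.
  move=> d w c x y [hx|hx]; first by left.
  move=> [hy|hy]; first by left.
  by right=> t ht; rewrite !ffunE hx // hy // ?mulr0 ?scaler0 addr0.
move=> d w a x [hx|hx]; first by left; rewrite (le_trans hx) // lerDl.
case: (boolP (D0%:Z <= d + 1)) => hd; first by left.
by right; apply: act_vanish.
Qed.

Lemma Nq_tq : torsion_quot Nq.
Proof.
move=> d w x; exists (absz (D0%:Z - d)); apply: (kill_high (D := D0%:Z)).
  by move=> *; left.
case: (lerP D0%:Z d) => h; last first.
  rewrite gez0_abs; first by rewrite addrCA subrr addr0.
  by rewrite subr_ge0 ltW.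
have -> : absz (D0%:Z - d) = absz (d - D0%:Z) by rewrite -abszN opprB.
rewrite gez0_abs; last by rewrite subr_ge0.
by rewrite (le_trans h) // lerDl subr_ge0.
Qed.

Lemma Ov_Nq : incl (Ov_rel k v (mkseq cw n)) Nq.
Proof. by move=> d w f h; right; exact: noOv. Qed.

Lemma Mt_sub : is_subgr Mt.
Proof. exact: tor_sub. Qed.

Lemma Mt_ts : torsion_sub Mt.
Proof. by []. Qed.

Lemma gg_I d w f : Ov_rel k v (mkseq cw n) d w f -> Mt (gg f).
Proof.
move=> h; rewrite /Mt /gg vanish_coef ?gZ0; last exact: noOv.
by case: ifP => _; exact: tor0.
Qed.


Lemma pact_idx (G : grmod k Q) (p : Pt G) a :
  projT1 (pact a p) = ((projT1 p).1 + 1, tgt a).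
Proof. by case: p. Qed.

Lemma tor_scale d w (c : k) (x : gsp M d w) : tor x -> tor (c *: x).
Proof. by move=> h; rewrite -(addr0 (c *: x)); apply: tor_lin => //; exact: tor0. Qed.

Lemma gg_qhom : qhom Nq Mt gg.
Proof.
split.
  move=> d w c x y _ _; rewrite /Mt /gg; case: ifP => _.
    by rewrite coef_lin gZ_lin subrr; exact: tor0.
  by rewrite scaler0 addr0 subrr; exact: tor0.
move=> d w a x hx; rewrite /Mt /gg.
case: (boolP (D0%:Z <= d + 1)) => h1; last first.
  have h0 : ~~ (D0%:Z <= d) by apply: contra h1 => h; rewrite (le_trans h) // lerDl.
  by rewrite (negbTE h0) (gact0 hM) subrr; exact: tor0.
case: (boolP (D0%:Z <= d)) => h0; last first.
  case: hx => [hx|hx]; first by rewrite hx in h0.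
  rewrite (gact0 hM) subr0 vanish_coef ?gZ0; first exact: tor0.
  by move=> t ht; exact: act_vanish.
have d0 : 0 <= d by apply: le_trans h0.
rewrite coef_act //.
case: (eqVneq w (src (cw (absz d)))) => hw; last first.
  by rewrite (coef_wrong x hw) if_same gZ0 gZ0 (gact0 hM) subrr; exact: tor0.
have hdD : absz d = (D0 + absz (d - D0%:Z))%N.
  apply/eqP; rewrite -eqz_nat PoszD !gez0_abs ?subr_ge0 //.
  by rewrite addrCA subrr addr0.
have cwt : cw (absz (d - D0%:Z)) = cw (absz d) by rewrite hdD cw_D0.
have e1 := gZ_idx h0 hw; rewrite (gZ_eq _ e1) gactZ.
have e2' : projT1 (pact a (Zs (absz (d - D0%:Z)))) = (d + 1, tgt a).
  by rewrite pact_idx e1.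
case: eqP => [ea|na].
  have hw1 : tgt a = src (cw (absz (d + 1))) by rewrite ea abszS // Hpath.
  have e2 := gZ_idx h1 hw1; rewrite (gZ_eq _ e2).
  have ht : absz (d + 1 - D0%:Z)%R = (absz (d - D0%:Z)%R).+1.
    by rewrite addrAC abszS // subr_ge0.
  move: e2; rewrite ht HZnext cwt -ea => e2.
  by rewrite (cast_act e1 e2) subrr; exact: tor0.
rewrite gZ0 sub0r -scaleN1r; apply: tor_scale; apply: tor_scale.
rewrite -(cast_act e1 e2'); apply: (proj2 (@cast_tor _ _ e2' _)); apply: HZexit.
by rewrite cwt; apply/eqP.
Qed.

Lemma kill_monoS (G : grmod k Q) (S : grsub G) : is_subgr S ->
  forall n d w x, killmod S n d w x -> killmod S n.+1 d w x.
Proof.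
move=> hS; elim=> [|m IH] d w x /=; first by move=> h a; exact: hS.2.2.
by move=> h a; apply: IH.
Qed.

Lemma kill_monoL (G : grmod k Q) (S : grsub G) : is_subgr S ->
  forall n1 m1 d w x, (n1 <= m1)%N -> killmod S n1 d w x -> killmod S m1 d w x.
Proof.
move=> hS n1 m1 d w x /subnK <-; elim: (m1 - n1)%N => // j IH h; rewrite addSn.
exact/(kill_monoS hS)/IH.
Qed.

Lemma coefP_act (p : Pt (evkQ k v)) a : 0 <= (projT1 p).1 ->
  coef (projT2 (pact a p)) = if a == cw (absz (projT1 p).1) then coef (projT2 p) else 0.
Proof. by case: p => [[d w] x] /= h; exact: coef_act. Qed.

Definition e0 : evkQ_sp k v 0 v := [ffun _ => 1].
Definition pe0 : Pt (evkQ k v) := @pmk k Q (evkQ k v) 0 v e0.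

Lemma fold_e L : (projT1 (pfold pe0 (cycw L)) = (Posz L, src (cw L))) /\
  (coef (projT2 (pfold pe0 (cycw L))) = 1).
Proof.
elim: L => [|L [IH1 IH2]].
  split; first by rewrite /= Hv.
  have hp : ispath v v (cycw (absz 0)) by rewrite /= eqxx.
  by rewrite /= (@coef_single _ _ _ (mkb (lexx 0) hp)) // ffunE.
rewrite /pfold cycwS foldl_rcons -/(pfold _ _); split.
  by rewrite pact_idx IH1 /= Hpath -PoszD addn1.
rewrite coefP_act; last by rewrite IH1.
case: eqP => [_|ne]; first exact: IH2.
by exfalso; apply: ne; rewrite IH1.
Qed.

Lemma not_hom : HomQGr_zero (Ov_rel k v (mkseq cw n)) M -> False.
Proof.
move=> H.
have [N'' [M'' [sN'' [_ [_ [tN'' [_ [tM'' [_ hg]]]]]]]]] :=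
  H Nq Mt gg Nq_sub Ov_Nq Nq_tq Mt_sub Mt_ts gg_qhom gg_I.
have [m hm] := tN'' 0 v e0.
have hL := kill_monoL sN'' (leq_addr D0 m) hm.
move/killmodP: hL => /(_ (cycw (m + D0)) (size_mkseq _ _)).
have [] := fold_e (m + D0).
set L := (m + D0)%N.
case: (pfold _ _) => [[d w] f] /= [hd hw] hc hP; subst d w.
have := tM'' _ _ _ (hg _ _ _ hP) => ht.
move: ht; rewrite /gg.
have hDL : D0%:Z <= L%:Z by rewrite lez_nat leq_addl.
rewrite hDL hc.
have e1 := gZ_idx hDL (erefl _).
rewrite (gZ_eq _ e1) scale1r => /cast_tor.
exact: HZnt.
Qed.

End Construction.

Definition pdec (P : Prop) : bool := if excluded_middle_informative P then true else false.
Lemma pdecP (P : Prop) : reflect P (pdec P).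
Proof. by rewrite /pdec; case: excluded_middle_informative => h; constructor. Qed.

Section Hard.
Variables (k : fieldType) (Q : quiver) (M : grmod k Q).
Hypothesis hM : is_grmod M.
Hypothesis hGK : finite_GKdim Q.
Hypothesis hyp : forall v c, simple_cycle v c -> HomQGr_zero (Ov_rel k v c) M.

Definition reachp (u w : qV Q) := exists s, ispath u w s.

Lemma reach_trans u x y : reachp u x -> reachp x y -> reachp u y.
Proof. by move=> [s hs] [t ht]; exists (s ++ t); exact: ispath_catP hs ht. Qed.

Definition RR (u : qV Q) : {set qV Q} := [set x | pdec (reachp u x)].

Lemma nontor_arrow d w (x : gsp M d w) : ~ tor x -> exists a, ~ tor (gact M d w a x).
Proof.
move=> h; apply: NNPP => hn; apply: h; apply: tor_arrows => // a.
by apply: NNPP => h'; apply: hn; exists a.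
Qed.

Lemma main_contra d1 w1 (x1 : gsp M d1 w1) : ~ tor x1 -> False.
Proof.
move=> hx1.
pose NT m := pdec (exists d w (x : gsp M d w), ~ tor x /\ #|RR w| = m).
have exNT : exists m, NT m by exists #|RR w1|; apply/pdecP; exists d1, w1, x1.
case: (ex_minnP exNT) => m0 /pdecP [d0 [w0 [y0 [hy0 hm0]]]] hmin.
have F d u (z : gsp M d u) : ~ tor z -> reachp w0 u -> reachp u w0.
  move=> hz hr.
  have sub : RR u \subset RR w0.
    apply/subsetP => x; rewrite !inE => /pdecP h; apply/pdecP; exact: reach_trans hr h.
  have le : (m0 <= #|RR u|)%N by apply: hmin; apply/pdecP; exists d, u, z.
  have : RR u == RR w0 by rewrite eqEcard sub /= hm0.
  move/eqP=> E; have : w0 \in RR w0 by rewrite inE; apply/pdecP; exists [::]; rewrite /= eqxx.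
  by rewrite -E inE => /pdecP.
have [a ha] := nontor_arrow hy0.
have sa : src a = w0.
  by case: (eqVneq w0 (src a)) => // hs; case: ha; exact: tor_src.
have [s hs] : reachp (tgt a) w0.
  by apply: (F _ _ _ ha); exists [:: a]; rewrite /= sa !eqxx.
pose P n := [exists t : n.-tuple (qA Q), ispath w0 w0 t] && (0 < n)%N.
have exP : exists n, P n.
  exists (size (a :: s)); rewrite /P /=; apply/andP; split => //.
  by apply/existsP; exists (in_tuple (a :: s)); rewrite /= sa eqxx hs.
case: (ex_minnP exP) => n /andP [/existsP [ct hct] hn] hminn.
set cs : seq (qA Q) := tval ct.
have scs : size cs = n by rewrite size_tuple.
have hcs : ispath w0 w0 cs by [].
have ucs : uniq (map (@src Q) cs).
  apply/negPn/negP => /(uniqPn (src a)) [i [j [hij hj E]]].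
  rewrite size_map scs in hj.
  have hi : (i < n)%N by apply: ltn_trans hij hj.
  rewrite !(nth_map a) ?scs // in E.
  pose c' := take i cs ++ drop j cs.
  have pc' : ispath w0 w0 c'.
    have h1 : ispath w0 (pend w0 (take i cs)) (take i cs).
      by move: hcs; rewrite -{1}(cat_take_drop i cs) ispath_cat => /andP [].
    have h2 : ispath (pend w0 (take j cs)) w0 (drop j cs).
      by move: hcs; rewrite -{1}(cat_take_drop j cs) ispath_cat => /andP [].
    apply: ispath_catP h1 _.
    by rewrite -(src_nth a hcs) ?scs // E (src_nth a hcs) ?scs.
  have sc' : size c' = (i + (n - j))%N.
    rewrite size_cat size_takel; last by rewrite scs ltnW.
    by rewrite size_drop scs.
  have : (n <= size c')%N.
    apply: hminn; rewrite /P sc'; apply/andP; split; last by rewrite addn_gt0 subn_gt0 hj orbT.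
    apply/existsP; exists (tcast sc' (in_tuple c')); by rewrite val_tcast.
  rewrite sc'; lia.
pose cc j := nth a cs (j %% n).
have cc_per i : cc (i + n)%N = cc i by rewrite /cc modnDr.
have src0 : src (nth a cs 0) = w0 by rewrite (src_nth a hcs) ?take0 // scs.
have cc_path j : tgt (cc j) = src (cc j.+1).
  rewrite /cc -addn1 -modnDml addn1.
  have hj : (j %% n < n)%N by rewrite ltn_mod.
  move: (j %% n)%N hj => j' hj'.
  rewrite (tgt_nth a hcs) ?scs //.
  case: (ltngtP j'.+1 n) => h.
  - by rewrite modn_small // (src_nth a hcs) ?scs.
  - lia.
  - by rewrite h modnn -scs take_size -(ispath_end hcs) src0.
have walk j m : ispath (src (cc j)) (src (cc (j + m))) (mkseq (fun i => cc (j + i)) m).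
  have hf i : tgt (cc (j + i)%N) = src (cc (j + i.+1)%N) by rewrite cc_path addnS.
  by have := walk_path (f := fun i => cc (j + i)%N) hf m; rewrite /= addn0.
have uu0 : src (cc 0) = w0 by rewrite /cc mod0n.
have reach_uu L : reachp w0 (src (cc L)).
  by exists (mkseq (fun i => cc (0 + i)) L); rewrite -uu0 -{2}(add0n L); exact: walk.
pose Z L := pfold (pmk y0) (mkseq cc L).
have ZS L : Z L.+1 = pact (cc L) (Z L) by rewrite /Z /pfold mkseqS foldl_rcons.
have Zexit L b : projT1 (Z L) = (d0 + Posz L, src (cc L)) -> b != cc L -> torP (pact b (Z L)).
  case: (Z L) => [[d u] z] /= [hd hu] ne; subst d u.
  apply: NNPP => /= hb.
  have sb : src b = src (cc L).
    by case: (eqVneq (src (cc L)) (src b)) => // hs3; case: hb; exact: tor_src.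
  have [s2 hs2] : reachp (tgt b) w0.
    apply: (F _ _ _ hb); apply: reach_trans (reach_uu L) _.
    by exists [:: b]; rewrite /= sb !eqxx.
  have c1 : ispath (src (cc L)) (src (cc L)) (b :: (s2 ++ mkseq cc L)).
    rewrite /= sb eqxx /=; apply: ispath_catP hs2 _.
    by rewrite -uu0 -{2}(add0n L); exact: walk.
  have c2 : ispath (src (cc L)) (src (cc L)) (mkseq (fun i => cc (L + i)) n).
    by rewrite -{2}cc_per; exact: walk.
  move: c2; case: (n) hn => // n' _; rewrite /mkseq => c2.
  move/eqP: ne; apply; rewrite (closed_head hGK c1 c2); congr (cc _); exact: addn0.
have Zok L : projT1 (Z L) = (d0 + Posz L, src (cc L)) /\ ~ torP (Z L).
  elim: L => [|L [IH1 IH2]].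
    by rewrite /= addr0 uu0.
  rewrite ZS; split.
    by rewrite pact_idx IH1 /= cc_path -addrA -PoszD addn1.
  have [a' ha'] : exists a', ~ torP (pact a' (Z L)).
    move: IH2; rewrite /torP; case: (Z L) => [[d u] z] /= hz.
    exact: nontor_arrow hz.
  case: (eqVneq a' (cc L)) => [<- //|ne].
  by case: ha'; exact: Zexit.
have [K0 hK0] : exists K0 : nat, d0 + Posz K0 = Posz (n * absz d0)%N.
  exists (absz (Posz (n * absz d0)%N - d0)); rewrite gez0_abs.
    by rewrite addrCA subrr addr0.
  rewrite subr_ge0 (le_trans (lez_abs d0)) // lez_nat leq_pmull //.
pose D0 := (n * absz d0)%N.
pose cw i := cc (K0 + i)%N.
pose Zs t := Z (K0 + t)%N.
apply: (@not_hom k Q M hM (src (cw 0)) n D0 cw Zs).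
- by move=> i; rewrite /cw addnA cc_per.
- by move=> i; rewrite /cw cc_path addnS.
- by [].
- exact: dvdn_mulr.
- move=> t; rewrite /Zs (Zok _).1 PoszD addrA hK0 -PoszD.
  by [].
- by move=> t; exact: (Zok _).2.
- by move=> t; rewrite /Zs addnS ZS.
- by move=> t b ne; apply: Zexit => //; exact: (Zok _).1.
apply: hyp; rewrite /simple_cycle size_mkseq hn /=.
apply/andP; split.
  have hf i : tgt (cw i) = src (cw i.+1) by rewrite /cw cc_path addnS.
  have := walk_path hf n.
  by rewrite {2}/cw cc_per /cw addn0.
rewrite -map_comp /mkseq map_inj_in_uniq ?iota_uniq // => i j.
rewrite !mem_iota !add0n => hi hj /= E.
have := nth_uniq (src a) (s := map (@src Q) cs) _ _ ucs.
rewrite !size_map scs => /(_ ((K0 + i) %% n)%N ((K0 + j) %% n)%N).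
rewrite !ltn_mod hn !(nth_map a) ?scs ?ltn_mod // => /(_ isT isT).
rewrite /cw /cc in E; rewrite E eqxx eqn_modDl !modn_small // => /esym /eqP.
by [].
Qed.

End Hard.

Theorem proposition5p7 (k : fieldType) (Q : quiver) (M : grmod k Q) :
  finite_GKdim Q -> is_grmod M ->
  (pi_zero M <->
   forall (v : qV Q) (c : seq (qA Q)), simple_cycle v c ->
     HomQGr_zero (Ov_rel k v c) M).
Proof.
move=> hGK hM; split.
  move=> h v c _; apply: allTor_Hom; exact: pi_zero_tor.
move=> hyp; apply: allTor_Hom => d w x.
by apply: NNPP => hx; exact: (main_contra hM hGK hyp hx).
Qed.
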